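(* Under the hypotheses of Theorem 2 (bounds $0\le\nu_i<\mu_i$, $\sum\nu_i\le1\le\sum\mu_i$, $\Phi\in\Lambda$), suppose $\xi^*=\{(\boldsymbol{x}_i,w_i)\}$ is $\Phi$-optimal in $\Xi$ with $\Phi(\xi^* )<\infty$, and let $\mathcal{X}_1=\{\boldsymbol{x}_i:w_i=\nu_i\}$, $\mathcal{X}_3=\{\boldsymbol{x}_i:w_i=\mu_i\}$, $\mathcal{X}_2=\{\boldsymbol{x}_i:\nu_i<w_i<\mu_i\}$. If $\mathcal{X}_2\ne\emptyset$, then $F_\Phi(\xi^*;\boldsymbol{x}_i)$ takes a common value $s$ for all $\boldsymbol{x}_i\in\mathcal{X}_2$, and $$s=\frac{-\sum_{\boldsymbol{x}_i\in\mathcal{X}_1}F_\Phi(\xi^*;\boldsymbol{x}_i)\nu_i-\sum_{\boldsymbol{x}_i\in\mathcal{X}_3}F_\Phi(\xi^*;\boldsymbol{x}_i)\mu_i}{1-\left(\sum_{\boldsymbol{x}_i\in\mathcal{X}_1}\nu_i+\sum_{\boldsymbol{x}_i\in\mathcal{X}_3}\mu_i\right)}.$$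
   Context: Design space $\mathcal{X}=\{\boldsymbol{x}_1,\ldots,\boldsymbol{x}_N\}$; designs $\xi=\{(\boldsymbol{x}_i,w_i)\}$ with $w_i\ge0$, $\sum w_i=1$; $\Xi$ is the set of designs with $\nu_i\le w_i\le\mu_i$. $\Phi(\xi)$ is a criterion of $M(\xi)=\sum_iw_iI_{\boldsymbol\theta}(\boldsymbol{x}_i)$ ($+\infty$ when undefined). $F_\Phi(\xi,\eta)=\lim_{\alpha\downarrow0}[\Phi((1-\alpha)\xi+\alpha\eta)-\Phi(\xi)]/\alpha$ and $F_\Phi(\xi;\boldsymbol{x}_i)=F_\Phi(\xi,\delta_{\boldsymbol{x}_i})$ with $\delta_{\boldsymbol{x}_i}$ the one-point design at $\boldsymbol{x}_i$. $\Lambda$: criteria that are convex in the weights, linearly differentiable ($F_\Phi(\xi,\eta)=\sum_i\lambda_iF_\Phi(\xi;\boldsymbol{x}_i)$ for $\eta=\{(\boldsymbol{x}_i,\lambda_i)\}$ whenever $\Phi(\xi)<\infty$), and infinitely differentiable along line segments of designs. *)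

(* Defs.v *)
From HB Require Import structures.
From mathcomp Require Import all_boot all_order all_algebra.
From mathcomp Require Import all_classical all_reals all_analysis.
Set Implicit Arguments. Unset Strict Implicit. Unset Printing Implicit Defensive.
Import Order.TTheory GRing.Theory Num.Theory numFieldNormedType.Exports.
Local Open Scope classical_set_scope.
Local Open Scope ring_scope.

Section Defs.
Variable R : realType.
Variable N : nat.

(* A design on X = {x_1,...,x_N} is identified with its weight vector. *)
Definition is_design (w : 'I_N -> R) : Prop :=
  (forall i, 0 <= w i) /\ \sum_i w i = 1.

Definition in_Xi (nu mu : 'I_N -> R) (w : 'I_N -> R) : Prop :=
  is_design w /\ forall i, nu i <= w i <= mu i.

Definition mixd (xi eta : 'I_N -> R) (a : R) : 'I_N -> R :=
  fun i => (1 - a) * xi i + a * eta i.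

Definition delta (i : 'I_N) : 'I_N -> R := fun j => (j == i)%:R.

Definition info_mx (p : nat) (I : 'I_N -> 'M[R]_p) (w : 'I_N -> R) : 'M[R]_p :=
  \sum_i w i *: I i.

Definition dirquot (Phi : ('I_N -> R) -> \bar R) (xi eta : 'I_N -> R) (a : R)
  : \bar R := ((Phi (mixd xi eta a) - Phi xi) * (a^-1)%:E)%E.

Definition Fdir (Phi : ('I_N -> R) -> \bar R) (xi eta : 'I_N -> R) : \bar R :=
  lim (dirquot Phi xi eta a @[a --> 0^'+]).

Definition Fpt (Phi : ('I_N -> R) -> \bar R) (xi : 'I_N -> R) (i : 'I_N) : R :=
  fine (Fdir Phi xi (delta i)).

Definition convex_in_weights (Phi : ('I_N -> R) -> \bar R) : Prop :=
  forall xi eta a, is_design xi -> is_design eta -> 0 <= a <= 1 ->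
    (Phi (mixd xi eta a) <= (1 - a)%:E * Phi xi + a%:E * Phi eta)%E.

Definition lin_differentiable (Phi : ('I_N -> R) -> \bar R) : Prop :=
  forall xi, is_design xi -> (Phi xi < +oo)%E ->
    (forall i, exists d : R, dirquot Phi xi (delta i) a @[a --> 0^'+] --> d%:E)
    /\ (forall eta, is_design eta ->
          dirquot Phi xi eta a @[a --> 0^'+]
            --> (\sum_i eta i * Fpt Phi xi i)%:E).

Definition smooth_on_segments (Phi : ('I_N -> R) -> \bar R) : Prop :=
  forall xi eta, is_design xi -> is_design eta ->
    forall (n : nat) (a : R), 0 < a < 1 -> (Phi (mixd xi eta a) < +oo)%E ->
      derivable (derive1n n (fun t => fine (Phi (mixd xi eta t)))) a 1.

Definition in_Lambda (Phi : ('I_N -> R) -> \bar R) : Prop :=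
  convex_in_weights Phi /\ lin_differentiable Phi /\ smooth_on_segments Phi.

Definition optimal_in_Xi (Phi : ('I_N -> R) -> \bar R) (nu mu w : 'I_N -> R)
  : Prop := in_Xi nu mu w /\ forall eta, in_Xi nu mu eta -> (Phi w <= Phi eta)%E.

End Defs.

(* Main.v *)
Require Import Defs.
From HB Require Import structures.
From mathcomp Require Import all_boot all_order all_algebra.
From mathcomp Require Import all_classical all_reals all_analysis.
From mathcomp Require Import ring lra.
Import Order.TTheory GRing.Theory Num.Theory.
Local Open Scope ring_scope.

Section Aux.
Variables (R : realType) (N : nat).

Lemma sum_delta (j : 'I_N) (g : 'I_N -> R) :
  \sum_k (k == j)%:R * g k = g j.
Proof.
rewrite (bigD1 j) //= eqxx mul1r big1 ?addr0 // => k /negbTE ->.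
by rewrite mul0r.
Qed.

Lemma sum_delta1 (j : 'I_N) : \sum_k ((k == j)%:R : R) = 1.
Proof.
rewrite (bigD1 j) //= eqxx big1 ?addr0 // => k /negbTE ->. by [].
Qed.

Lemma mixd_Xi (nu mu w eta : 'I_N -> R) a :
  in_Xi nu mu w -> in_Xi nu mu eta -> 0 <= a <= 1 ->
  in_Xi nu mu (mixd w eta a).
Proof.
move=> [[w0 w1] wb] [[e0 e1] eb] /andP[a0 a1]; split; first split.
- move=> i; rewrite /mixd; have := w0 i; have := e0 i; nra.
- rewrite /mixd big_split /= -!mulr_sumr w1 e1; lra.
- move=> i; rewrite /mixd; have /andP[? ?] := wb i; have /andP[? ?] := eb i.
  apply/andP; split; nra.
Qed.

End Aux.

Theorem mainTheorem3 (R : realType) (N p : nat) (I : 'I_N -> 'M[R]_p)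
  (psi : 'M[R]_p -> \bar R) (nu mu w : 'I_N -> R) :
  let Phi := fun xi : 'I_N -> R => psi (info_mx I xi) in
  (forall i, 0 <= nu i < mu i) ->
  \sum_i nu i <= 1 -> 1 <= \sum_i mu i ->
  in_Lambda Phi ->
  optimal_in_Xi Phi nu mu w ->
  (Phi w < +oo)%E ->
  (exists i, nu i < w i < mu i) ->
  exists s : R,
    (forall i, nu i < w i < mu i -> Fpt Phi w i = s) /\
    s = (- (\sum_(i | w i == nu i) Fpt Phi w i * nu i)
         - (\sum_(i | w i == mu i) Fpt Phi w i * mu i))
        / (1 - (\sum_(i | w i == nu i) nu i + \sum_(i | w i == mu i) mu i)).
Proof.
move=> Phi hnm hsnu hsmu [Hcvx [Hlin Hsm]] [HwX Hopt] Hfin [i0 Hi0].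
have Hdw : is_design w := HwX.1.
have [_ Hl] := Hlin w Hdw Hfin.
set F := Fpt Phi w.
have mixww : forall a, mixd w w a = w.
  by move=> a; apply/funext => i; rewrite /mixd; lra.
have Hlw := Hl w Hdw.
have [r Hr] : exists r, Phi w = r%:E.
  move: Hfin; case E: (Phi w) => [r| |] // _; first by exists r.
  exfalso.
  have Hc : (dirquot Phi w w a @[a --> 0^'+] --> (-oo%E : \bar R))%classic.
    apply: cvg_near_cst; near=> a.
    have ha0 : 0 < a by near: a; exact: nbhs_right_gt.
    rewrite /dirquot mixww E /=; apply: gt0_mulNye.
    by rewrite lte_fin invr_gt0.
  have h1 := @cvg_lim _ (@ereal_hausdorff R) _ _ (at_right_proper_filter 0) _ _ Hc.
  have h2 := @cvg_lim _ (@ereal_hausdorff R) _ _ (at_right_proper_filter 0) _ _ Hlw.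
  by rewrite h1 in h2; case: h2.
have Hsw : \sum_i w i * F i = 0.
  have Hc : (dirquot Phi w w a @[a --> 0^'+] --> (0%:E : \bar R))%classic.
    apply: cvg_near_cst; near=> a.
    by rewrite /dirquot mixww Hr subee // mul0e.
  have h1 := @cvg_lim _ (@ereal_hausdorff R) _ _ (at_right_proper_filter 0) _ _ Hc.
  have h2 := @cvg_lim _ (@ereal_hausdorff R) _ _ (at_right_proper_filter 0) _ _ Hlw.
  by rewrite h1 in h2; case: h2.
have Hge : forall eta, in_Xi nu mu eta -> 0 <= \sum_i eta i * F i.
  move=> eta Heta; have Hc := Hl eta Heta.1.
  rewrite -lee_fin -(@cvg_lim _ (@ereal_hausdorff R) _ _ (at_right_proper_filter 0) _ _ Hc) //; apply: lime_ge; first exact: cvgP Hc.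
  near=> a.
  have ha0 : 0 < a by near: a; exact: nbhs_right_gt.
  have ha1 : a < 1 by near: a; apply: nbhs_right_lt; exact: ltr01.
  rewrite /dirquot; apply: mule_ge0; last by rewrite lee_fin invr_ge0 ltW.
  rewrite Hr suber_ge0 // -Hr; apply: Hopt; apply: mixd_Xi => //.
  by rewrite !ltW.
have Heq : forall i j, nu i < w i < mu i -> nu j < w j < mu j -> F i <= F j.
  move=> i j /andP[hi1 hi2] /andP[hj1 hj2].
  have [->|hij] := eqVneq i j; first by [].
  pose e := Num.min (mu j - w j) (w i - nu i).
  have e0 : 0 < e by rewrite lt_min !subr_gt0 hj2 hi1.
  have e1 : e <= mu j - w j by rewrite ge_min lexx.
  have e2 : e <= w i - nu i by rewrite ge_min lexx orbT.
  clearbody e.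
  pose eta := fun k => w k + e * ((k == j)%:R - (k == i)%:R).
  have Hb : forall k, nu k <= eta k <= mu k.
    move=> k; rewrite /eta.
    have hji : j != i by rewrite eq_sym.
    have [->|hkj] := eqVneq k j.
      rewrite (negbTE hji) mulr0n subr0 mulr1n mulr1.
      have /andP[? ?] := HwX.2 j; apply/andP; split; lra.
    have [->|hki] := eqVneq k i.
      rewrite mulr0n sub0r mulr1n mulrN1.
      have /andP[? ?] := HwX.2 i; apply/andP; split; lra.
    by rewrite subrr mulr0 addr0; exact: HwX.2.
  have Heta : in_Xi nu mu eta.
    split=> //; split.
      move=> k; have := hnm k; have := Hb k; move=> /andP[? _] /andP[? _]; lra.
    rewrite /eta big_split /= -mulr_sumr sumrB.
    rewrite !sum_delta1.
    by rewrite subrr mulr0 addr0 Hdw.2.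
  have Hid : \sum_k eta k * F k = \sum_k w k * F k + e * (F j - F i).
    rewrite /eta; under eq_bigr do rewrite mulrDl.
    rewrite big_split /=; congr (_ + _).
    rewrite -(@sum_delta R N j F) -(@sum_delta R N i F) -sumrB mulr_sumr.
    by apply: eq_bigr => k _; ring.
  have := Hge eta Heta; rewrite Hid Hsw add0r => h.
  have : 0 <= F j - F i by nra.
  by rewrite subr_ge0.
have HX2 : forall k, (w k != nu k) && (w k != mu k) = (nu k < w k < mu k).
  move=> k; have /andP[wk1 wk2] := HwX.2 k.
  by rewrite !lt_neqAle wk1 wk2 !andbT (eq_sym (nu k)).
exists (F i0); split.
  move=> i hi; apply/eqP; rewrite eq_le; apply/andP; split; exact: Heq.
have Hdisj : forall k, (w k != nu k) && (w k == mu k) = (w k == mu k).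
  move=> k; have [->|hk] := eqVneq (w k) (mu k); last by rewrite andbF.
  by have /andP[_ h] := hnm k; rewrite andbT (gt_eqF h).
have split3 : forall g : 'I_N -> R, \sum_k g k =
   \sum_(k | w k == nu k) g k + \sum_(k | w k == mu k) g k
   + \sum_(k | nu k < w k < mu k) g k.
  move=> g; rewrite (bigID (fun k => w k == nu k)) /= -addrA; congr (_ + _).
  rewrite (bigID (fun k => w k == mu k)) /=; congr (_ + _).
    by apply: eq_bigl => k; rewrite Hdisj.
  by apply: eq_bigl => k; rewrite HX2.
have H1 := split3 (fun k => w k * F k).
have H2 := split3 w.
have E1 : \sum_(k | w k == nu k) w k * F k = \sum_(k | w k == nu k) F k * nu k.
  by apply: eq_bigr => k /eqP ->; rewrite mulrC.
have E3 : \sum_(k | w k == mu k) w k * F k = \sum_(k | w k == mu k) F k * mu k.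
  by apply: eq_bigr => k /eqP ->; rewrite mulrC.
have E2 : \sum_(k | nu k < w k < mu k) w k * F k =
          (\sum_(k | nu k < w k < mu k) w k) * F i0.
  rewrite mulr_suml; apply: eq_bigr => k hk; congr (_ * _).
  by apply/eqP; rewrite eq_le; apply/andP; split; exact: Heq.
have E4 : \sum_(k | w k == nu k) w k = \sum_(k | w k == nu k) nu k.
  by apply: eq_bigr => k /eqP.
have E5 : \sum_(k | w k == mu k) w k = \sum_(k | w k == mu k) mu k.
  by apply: eq_bigr => k /eqP.
rewrite Hsw E1 E2 E3 in H1.
rewrite Hdw.2 E4 E5 in H2.
set D := \sum_(k | nu k < w k < mu k) w k in H1 H2.
have D0 : 0 < D.
  rewrite /D (bigD1 i0) //=; apply: ltr_pwDl.
    have /andP[h _] := Hi0; have /andP[h1 _] := hnm i0; lra.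
  apply: sumr_ge0 => k /andP[/andP[hk _] _]; have /andP[h1 _] := hnm k; lra.
have -> : 1 - (\sum_(k | w k == nu k) nu k + \sum_(k | w k == mu k) mu k) = D.
  by rewrite H2; ring.
apply: (mulIf (lt0r_neq0 D0)); rewrite mulfVK ?lt0r_neq0 //.
by rewrite mulrC; lra.
Unshelve. all: by end_near.
Qed.
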